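(* Let $X$ be a locally compact metrizable space, $\Lambda\subset\mathbb{R}$ a compact interval and $\{F_\lambda\}_{\lambda\in\Lambda}$ a parameterized family of discrete multivalued dynamical systems on $X$. Assume $N$ is an isolating neighborhood with respect to $F_\mu$ for some $\mu\in\Lambda$, and $P,Q,R$ are weak index pairs in $N$ with respect to $F_\mu$ with $P\subset\operatorname{int}_NQ$ and $Q\subset\operatorname{int}_NR$ (componentwise). Then there exists a neighborhood $\Lambda_0$ of $\mu$ in $\Lambda$ such that for every $\lambda\in\Lambda_0$ there is a weak index pair $P(\lambda)$ in $N$ with respect to $F_\lambda$ satisfying $P\subset P(\lambda)\subset R$ (componentwise).
   Context: A discrete multivalued dynamical system (dmds) on $X$ is a usc map $F:X\times\mathbb{Z}\multimap X$ with compact values such that $F(x,0)=\{x\}$; $F(F(x,n),m)=F(x,n+m)$ whenever $nm\ge0$; $y\in F(x,-1)\iff x\in F(y,1)$; it is identified with its generator. A parameterized family of dmds is given by an upper semicontinuous map $F:\Lambda\times X\multimap X$ with compact values, determined by a morphism, such that for each $\lambda$, $F_\lambda(x):=F(\lambda,x)$ is (the generator of) a dmds. $\operatorname{Inv}(N,\lambda)$ is the set of $x\in N$ admitting $\sigma:\mathbb{Z}\to N$ with $\sigma(0)=x$, $\sigma(n+1)\in F_\lambda(\sigma(n))$; $N$ compact is an isolating neighborhood for $F_\lambda$ if $\operatorname{Inv}(N,\lambda)\subset\operatorname{int}N$. With $\operatorname{bd}_{F_\lambda}A:=\operatorname{cl}A\cap\operatorname{cl}(F_\lambda(A)\setminus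 A)$, a weak index pair in $N$ with respect to $F_\lambda$ is a pair of compact sets $P_2\subset P_1\subset N$ with (a) $F_\lambda(P_i)\cap N\subset P_i$, (b) $\operatorname{bd}_{F_\lambda}P_1\subset P_2$, (c) $\operatorname{Inv}(N,\lambda)\subset\operatorname{int}(P_1\setminus P_2)$, (d) $P_1\setminus P_2\subset\operatorname{int}N$. Inclusions of pairs such as $P\subset\operatorname{int}_NQ$ mean $P_i\subset\operatorname{int}_NQ_i$ for $i=1,2$. *)

(* Defs.v *)
From Stdlib Require Import Reals ZArith List.
Open Scope R_scope.

Definition subset {X : Type} (A B : X -> Prop) : Prop := forall x, A x -> B x.

Definition is_metric {X : Type} (d : X -> X -> R) : Prop :=
  (forall x y, 0 <= d x y) /\ (forall x y, d x y = 0 <-> x = y) /\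
  (forall x y, d x y = d y x) /\ (forall x y z, d x z <= d x y + d y z).

Definition ball {X : Type} (d : X -> X -> R) (x : X) (e : R) : X -> Prop :=
  fun y => d x y < e.

Definition is_open {X : Type} (d : X -> X -> R) (U : X -> Prop) : Prop :=
  forall x, U x -> exists e, 0 < e /\ subset (ball d x e) U.

Definition interior {X : Type} (d : X -> X -> R) (A : X -> Prop) : X -> Prop :=
  fun x => exists e, 0 < e /\ subset (ball d x e) A.

Definition rel_interior {X : Type} (d : X -> X -> R) (N A : X -> Prop) : X -> Prop :=
  fun x => A x /\ exists e, 0 < e /\ subset (fun y => ball d x e y /\ N y) A.

Definition closure {X : Type} (d : X -> X -> R) (A : X -> Prop) : X -> Prop :=
  fun x => forall e, 0 < e -> exists y, A y /\ d x y < e.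

Definition is_compact {X : Type} (d : X -> X -> R) (K : X -> Prop) : Prop :=
  forall (I : Type) (U : I -> X -> Prop),
    (forall i, is_open d (U i)) ->
    subset K (fun x => exists i, U i x) ->
    exists l : list I, subset K (fun x => exists i, In i l /\ U i x).

Definition locally_compact {X : Type} (d : X -> X -> R) : Prop :=
  forall x, exists K, is_compact d K /\ exists e, 0 < e /\ subset (ball d x e) K.

(* image of a set under a multivalued map f (f x y : y ∈ f(x)) *)
Definition image {X : Type} (f : X -> X -> Prop) (A : X -> Prop) : X -> Prop :=
  fun y => exists x, A x /\ f x y.

(* discrete multivalued dynamical system F : X × Z ⊸ X;
   F x n y means y ∈ F(x,n). Z carries the discrete topology. *)
Definition is_dmds {X : Type} (d : X -> X -> R) (F : X -> Z -> X -> Prop) : Prop :=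
  (forall x n (U : X -> Prop), is_open d U -> subset (F x n) U ->
     exists e, 0 < e /\ forall x', d x x' < e -> subset (F x' n) U) /\
  (forall x n, is_compact d (F x n)) /\
  (forall x y, F x 0%Z y <-> y = x) /\
  (forall x n m, (0 <= IZR n * IZR m) ->
     forall y, image (fun a => F a m) (F x n) y <-> F x (n + m)%Z y) /\
  (forall x y, F x (-1)%Z y <-> F y 1%Z x).

Definition is_dmds_generator {X : Type} (d : X -> X -> R) (f : X -> X -> Prop) : Prop :=
  exists F, is_dmds d F /\ forall x y, F x 1%Z y <-> f x y.

Definition in_interval (a b : R) : R -> Prop := fun l => a <= l /\ l <= b.

(* parameterized family of dmds over Λ = [a,b]; F l x y means y ∈ F(l,x).
   (The condition "determined by a morphism" is omitted.) *)
Definition param_family {X : Type} (d : X -> X -> R) (a b : R)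
    (F : R -> X -> X -> Prop) : Prop :=
  (forall l x (U : X -> Prop), in_interval a b l -> is_open d U -> subset (F l x) U ->
     exists e, 0 < e /\ forall l' x', in_interval a b l' -> Rabs (l - l') < e ->
       d x x' < e -> subset (F l' x') U) /\
  (forall l x, in_interval a b l -> is_compact d (F l x)) /\
  (forall l, in_interval a b l -> is_dmds_generator d (F l)).

Definition Inv {X : Type} (f : X -> X -> Prop) (N : X -> Prop) : X -> Prop :=
  fun x => N x /\ exists s : Z -> X,
    (forall n, N (s n)) /\ s 0%Z = x /\ (forall n, f (s n) (s (n + 1)%Z)).

Definition isolating_nbhd {X : Type} (d : X -> X -> R) (f : X -> X -> Prop)
    (N : X -> Prop) : Prop :=
  is_compact d N /\ subset (Inv f N) (interior d N).

Definition setminus {X : Type} (A B : X -> Prop) : X -> Prop := fun x => A x /\ ~ B x.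

Definition bd_f {X : Type} (d : X -> X -> R) (f : X -> X -> Prop) (A : X -> Prop) : X -> Prop :=
  fun x => closure d A x /\ closure d (setminus (image f A) A) x.

Definition weak_index_pair {X : Type} (d : X -> X -> R) (f : X -> X -> Prop)
    (N P1 P2 : X -> Prop) : Prop :=
  is_compact d P1 /\ is_compact d P2 /\ subset P2 P1 /\ subset P1 N /\
  subset (fun x => image f P1 x /\ N x) P1 /\
  subset (fun x => image f P2 x /\ N x) P2 /\
  subset (bd_f d f P1) P2 /\
  subset (Inv f N) (interior d (setminus P1 P2)) /\
  subset (setminus P1 P2) (interior d N).

(* Main.v *)
Require Import Defs.
From Stdlib Require Import Reals ZArith List.
Open Scope R_scope.
From Stdlib Require Import Lra Lia Classical ClassicalEpsilon.
Local Notation interior := Defs.interior.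

Definition is_closed {X : Type} (d : X -> X -> R) (A : X -> Prop) : Prop :=
  forall x, closure d A x -> A x.

Lemma m_pos {X} (d : X -> X -> R) : is_metric d -> forall x y, 0 <= d x y.
Proof. intros [H _]; exact H. Qed.
Lemma m_zero {X} (d : X -> X -> R) : is_metric d -> forall x, d x x = 0.
Proof. intros [_ [H _]] x; apply H; reflexivity. Qed.
Lemma m_sym {X} (d : X -> X -> R) : is_metric d -> forall x y, d x y = d y x.
Proof. intros [_ [_ [H _]]]; exact H. Qed.
Lemma m_tri {X} (d : X -> X -> R) : is_metric d -> forall x y z, d x z <= d x y + d y z.
Proof. intros [_ [_ [_ H]]]; exact H. Qed.
Lemma m_neq {X} (d : X -> X -> R) : is_metric d -> forall x y, x <> y -> 0 < d x y.
Proof. intros Hm x y Hxy. destruct (m_pos d Hm x y) as [H|H]; auto.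
  exfalso; apply Hxy. destruct Hm as [_ [H2 _]]. apply H2; auto. Qed.

Lemma ball_open {X} (d : X -> X -> R) : is_metric d -> forall x e, is_open d (ball d x e).
Proof.
  intros Hm x e y Hy. unfold ball in *. exists (e - d x y). split; [lra|].
  intros z Hz. unfold ball in *. pose proof (m_tri d Hm x y z). lra.
Qed.

Lemma gt_open {X} (d : X -> X -> R) : is_metric d -> forall z r, is_open d (fun y => r < d z y).
Proof.
  intros Hm z r y Hy. exists (d z y - r). split; [lra|].
  intros w Hw. unfold ball in *. pose proof (m_tri d Hm z w y). pose proof (m_sym d Hm w y). lra.
Qed.

Lemma interior_open {X} (d : X -> X -> R) : is_metric d -> forall A, is_open d (interior d A).
Proof.
  intros Hm A x [e [He Hs]]. exists e; split; auto.
  intros y Hy. destruct (ball_open d Hm x e y Hy) as [e' [He' Hs']].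
  exists e'; split; auto. intros z Hz. apply Hs, Hs', Hz.
Qed.

Lemma interior_sub {X} (d : X -> X -> R) : is_metric d -> forall A x, interior d A x -> A x.
Proof. intros Hm A x [e [He Hs]]. apply Hs. unfold ball. rewrite m_zero; auto. Qed.

Lemma closed_compl_open {X} (d : X -> X -> R) : is_metric d -> forall C,
  is_closed d C -> is_open d (fun x => ~ C x).
Proof.
  intros Hm C HC x Hx. apply NNPP; intro H. apply Hx, HC. intros e He.
  apply NNPP; intro H2. apply H. exists e; split; auto. intros y Hy HCy.
  apply H2. exists y; split; auto.
Qed.

Lemma open_compl_closed {X} (d : X -> X -> R) : is_metric d -> forall U,
  is_open d U -> is_closed d (fun x => ~ U x).
Proof.
  intros Hm U HU x Hx HUx. destruct (HU x HUx) as [e [He Hs]].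
  destruct (Hx e He) as [y [Hy1 Hy2]]. apply Hy1, Hs. exact Hy2.
Qed.

Lemma closed_inter {X} (d : X -> X -> R) : forall A B, is_closed d A -> is_closed d B ->
  is_closed d (fun x => A x /\ B x).
Proof.
  intros A B HA HB x Hx. split; [apply HA|apply HB]; intros e He;
  destruct (Hx e He) as [y [[H1 H2] H3]]; exists y; auto.
Qed.

Lemma closure_closed {X} (d : X -> X -> R) : is_metric d -> forall A, is_closed d (closure d A).
Proof.
  intros Hm A x Hx e He. destruct (Hx (e/2)) as [y [Hy1 Hy2]]; [lra|].
  destruct (Hy1 (e/2)) as [z [Hz1 Hz2]]; [lra|]. exists z; split; auto.
  pose proof (m_tri d Hm x y z); lra.
Qed.

Lemma closure_of {X} (d : X -> X -> R) : is_metric d -> forall A x, A x -> closure d A x.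
Proof. intros Hm A x Hx e He. exists x; split; auto. rewrite m_zero; auto. Qed.

Fixpoint lmax (l : list nat) : nat := match l with nil => 0%nat | i :: l' => Nat.max i (lmax l') end.
Lemma lmax_In : forall l i, In i l -> (i <= lmax l)%nat.
Proof. induction l; simpl; intros i H; [contradiction|]. destruct H; subst; [lia|].
  specialize (IHl i H); lia. Qed.

Lemma inv_small : forall r, 0 < r -> exists n : nat, / INR (S n) < r.
Proof.
  intros r Hr. destruct (archimed_cor1 r Hr) as [N [H1 H2]].
  exists N. assert (/ INR (S N) <= / INR N); [|lra].
  apply Rinv_le_contravar. apply lt_0_INR; lia. apply le_INR; lia.
Qed.

Lemma compact_sep {X} (d : X -> X -> R) : is_metric d -> forall K z,
  is_compact d K -> ~ K z -> exists r, 0 < r /\ forall x, K x -> r <= d z x.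
Proof.
  intros Hm K z HK Hz.
  destruct (HK nat (fun n y => / INR (S n) < d z y)) as [l Hl].
  - intro n; apply gt_open; auto.
  - intros x Hx. apply inv_small. apply m_neq; auto. intro; subst; auto.
  - exists (/ INR (S (lmax l))). split. apply Rinv_0_lt_compat, lt_0_INR; lia.
    intros x Hx. destruct (Hl x Hx) as [i [Hi1 Hi2]]. apply lmax_In in Hi1.
    assert (/ INR (S (lmax l)) <= / INR (S i)).
    { apply Rinv_le_contravar. apply lt_0_INR; lia. apply le_INR; lia. }
    lra.
Qed.

Lemma compact_closed {X} (d : X -> X -> R) : is_metric d -> forall K, is_compact d K -> is_closed d K.
Proof.
  intros Hm K HK z Hz. apply NNPP; intro Hn. destruct (compact_sep d Hm K z HK Hn) as [r [Hr H]].
  destruct (Hz r Hr) as [y [Hy1 Hy2]]. specialize (H y Hy1). lra.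
Qed.

Lemma compact_ext {X} (d : X -> X -> R) : forall A B, (forall x, A x <-> B x) ->
  is_compact d A -> is_compact d B.
Proof. intros A B HAB HA I U HU Hc. destruct (HA I U HU) as [l Hl].
  intros x Hx; apply Hc, HAB, Hx. exists l. intros x Hx; apply Hl, HAB, Hx. Qed.

Lemma compact_inter_closed {X} (d : X -> X -> R) : is_metric d -> forall K C,
  is_compact d K -> is_closed d C -> is_compact d (fun x => K x /\ C x).
Proof.
  intros Hm K C HK HC I U HU Hc.
  destruct (HK (option I) (fun o x => match o with Some i => U i x | None => ~ C x end)) as [l Hl].
  - intros [i|]; auto. apply closed_compl_open; auto.
  - intros x Hx. destruct (classic (C x)) as [HCx|HCx].
    + destruct (Hc x (conj Hx HCx)) as [i Hi]. exists (Some i); auto.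
    + exists None; auto.
  - exists (flat_map (fun o => match o with Some i => i :: nil | None => nil end) l).
    intros x [Hx HCx]. destruct (Hl x Hx) as [[i|] [Hi1 Hi2]]; [|contradiction].
    exists i; split; auto. apply in_flat_map. exists (Some i); simpl; auto.
Qed.

Lemma compact_inter {X} (d : X -> X -> R) : is_metric d -> forall K C,
  is_compact d K -> is_compact d C -> is_compact d (fun x => K x /\ C x).
Proof. intros; apply compact_inter_closed; auto. apply compact_closed; auto. Qed.

Lemma compact_union {X} (d : X -> X -> R) : forall A B,
  is_compact d A -> is_compact d B -> is_compact d (fun x => A x \/ B x).
Proof.
  intros A B HA HB I U HU Hc.
  destruct (HA I U HU) as [l1 H1]. intros x Hx; apply Hc; auto.
  destruct (HB I U HU) as [l2 H2]. intros x Hx; apply Hc; auto.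
  exists (l1 ++ l2). intros x [Hx|Hx]; [destruct (H1 x Hx) as [i [Hi1 Hi2]]|destruct (H2 x Hx) as [i [Hi1 Hi2]]];
  exists i; split; auto; apply in_or_app; auto.
Qed.

Lemma compact_empty {X} (d : X -> X -> R) : is_compact d (fun _ : X => False).
Proof. intros I U _ _. exists nil. intros x []. Qed.

Definition usc_map {X} (d : X -> X -> R) (h : X -> X -> Prop) : Prop :=
  forall x U, is_open d U -> subset (h x) U ->
    exists e, 0 < e /\ forall x', d x x' < e -> subset (h x') U.

Lemma union_open {X} (d : X -> X -> R) {I : Type} (U : I -> X -> Prop) (l : list I) :
  (forall i, is_open d (U i)) -> is_open d (fun y => exists i, In i l /\ U i y).
Proof.
  intros HU y [i [Hi Hy]]. destruct (HU i y Hy) as [e [He Hs]]. exists e; split; auto.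
  intros z Hz. exists i; split; auto.
Qed.

Lemma image_compact {X} (d : X -> X -> R) : is_metric d -> forall h K,
  usc_map d h -> (forall x, is_compact d (h x)) -> is_compact d K -> is_compact d (image h K).
Proof.
  intros Hm h K Hu Hc HK I U HU Hcov.
  set (J := {p : X * R * list I | K (fst (fst p)) /\ 0 < snd (fst p) /\
          forall x', d (fst (fst p)) x' < snd (fst p) -> subset (h x') (fun y => exists i, In i (snd p) /\ U i y)}).
  destruct (HK J (fun p => ball d (fst (fst (proj1_sig p))) (snd (fst (proj1_sig p))))) as [l Hl].
  - intro p; apply ball_open; auto.
  - intros x Hx. destruct (Hc x I U HU) as [lx Hlx].
    { intros y Hy. apply Hcov. exists x; split; auto. }
    destruct (Hu x _ (union_open d U lx HU) Hlx) as [e [He Hs]].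
    exists (exist _ ((x, e), lx) (conj Hx (conj He Hs))). simpl. unfold ball. rewrite m_zero; auto.
  - exists (flat_map (fun p => snd (proj1_sig p)) l).
    intros y [x [Hx Hy]]. destruct (Hl x Hx) as [p [Hp1 Hp2]].
    destruct p as [[[x0 e] lx] [H1 [H2 H3]]]. simpl in Hp2. unfold ball in Hp2.
    destruct (H3 x Hp2 y Hy) as [i [Hi1 Hi2]]. exists i; split; auto.
    apply in_flat_map. exists (exist _ ((x0, e), lx) (conj H1 (conj H2 H3))). split; auto.
Qed.

Lemma nested_compact {X} (d : X -> X -> R) : is_metric d -> forall K : nat -> X -> Prop,
  (forall n, is_compact d (K n)) -> (forall n x, K (S n) x -> K n x) ->
  (forall n, exists x, K n x) -> exists x, forall n, K n x.
Proof.
  intros Hm K HK Hdec Hne. apply NNPP; intro H.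
  assert (Hle : forall n m x, (n <= m)%nat -> K m x -> K n x).
  { intros n m x Hnm. induction Hnm; auto. }
  destruct (HK 0%nat nat (fun n x => ~ K n x)) as [l Hl].
  - intro n; apply closed_compl_open; auto. apply compact_closed; auto.
  - intros x Hx. apply NNPP; intro H2. apply H. exists x. intro n. apply NNPP; intro H3. apply H2. exists n; auto.
  - destruct (Hne (lmax l)) as [x Hx]. destruct (Hl x (Hle _ _ _ (Nat.le_0_l _) Hx)) as [i [Hi1 Hi2]].
    apply Hi2. apply Hle with (lmax l); auto. apply lmax_In; auto.
Qed.

Section InvF.
Context {X : Type} (d : X -> X -> R) (Hm : is_metric d) (N : X -> Prop) (HN : is_compact d N)
  (f fi : X -> X -> Prop) (Hfu : usc_map d f) (Hfc : forall x, is_compact d (f x))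
  (Hfiu : usc_map d fi) (Hfic : forall x, is_compact d (fi x)) (Hfi : forall x y, fi y x <-> f x y).

Fixpoint Kf (j : nat) : X -> Prop :=
  match j with O => N | S j' => fun y => N y /\ exists x, Kf j' x /\ f x y end.
Fixpoint Ff (j : nat) : X -> Prop :=
  match j with O => N | S j' => fun x => N x /\ exists y, Ff j' y /\ f x y end.

Lemma Kf_compact : forall j, is_compact d (Kf j).
Proof. induction j; simpl; auto. apply compact_inter; auto. apply image_compact; auto. Qed.

Lemma Ff_compact : forall j, is_compact d (Ff j).
Proof. induction j; simpl; auto.
  apply compact_ext with (fun x => N x /\ image fi (Ff j) x).
  { intro x; unfold image; split; intros [H1 [y [H2 H3]]]; split; auto; exists y; split; auto; apply Hfi; auto. }
  apply compact_inter; auto. apply image_compact; auto. Qed.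

Lemma Kf_N : forall j x, Kf j x -> N x.
Proof. destruct j; simpl; intros; tauto. Qed.
Lemma Ff_N : forall j x, Ff j x -> N x.
Proof. destruct j; simpl; intros; tauto. Qed.

Lemma Kf_dec : forall j x, Kf (S j) x -> Kf j x.
Proof. induction j; simpl; intros x Hx. tauto.
  destruct Hx as [H1 [y [H2 H3]]]. split; auto. exists y; split; auto. Qed.
Lemma Ff_dec : forall j x, Ff (S j) x -> Ff j x.
Proof. induction j; simpl; intros x Hx. tauto.
  destruct Hx as [H1 [y [H2 H3]]]. split; auto. exists y; split; auto. Qed.

Definition Ainf (x : X) : Prop := forall j, Kf j x /\ Ff j x.

Lemma Inv_Ainf : forall x, Inv f N x -> Ainf x.
Proof.
  intros x [HNx [s [Hs1 [Hs2 Hs3]]]]. subst x.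
  assert (H : forall j n, Kf j (s n) /\ Ff j (s n)).
  { induction j; intro n; simpl; [auto|]. split.
    - split; auto. exists (s (n - 1)%Z). split. apply IHj.
      pose proof (Hs3 (n-1)%Z). replace (n - 1 + 1)%Z with n in H by lia. auto.
    - split; auto. exists (s (n + 1)%Z). split; auto. apply IHj. }
  intro j; apply H.
Qed.

Lemma Ainf_fwd : forall x, Ainf x -> exists y, f x y /\ Ainf y.
Proof.
  intros x Hx.
  destruct (nested_compact d Hm (fun m y => f x y /\ (Kf m y /\ Ff m y))) as [y Hy].
  - intro m. apply compact_inter; auto. apply compact_inter; auto using Kf_compact, Ff_compact.
  - intros m y [H1 [H2 H3]]. split; auto. split; [apply Kf_dec|apply Ff_dec]; auto.
  - intro m. destruct (Hx (S m)) as [_ [_ [y [H1 H2]]]]. exists y. split; auto. split; auto.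
    apply Kf_dec. simpl. split. apply Ff_N with m; auto. exists x; split; auto. apply (Hx m).
  - exists y. split. apply (Hy 0%nat). intro j; apply Hy.
Qed.

Lemma Ainf_bwd : forall x, Ainf x -> exists w, f w x /\ Ainf w.
Proof.
  intros x Hx.
  destruct (nested_compact d Hm (fun m w => fi x w /\ (Kf m w /\ Ff m w))) as [w Hw].
  - intro m. apply compact_inter; auto. apply compact_inter; auto using Kf_compact, Ff_compact.
  - intros m w [H1 [H2 H3]]. split; auto. split; [apply Kf_dec|apply Ff_dec]; auto.
  - intro m. destruct (Hx (S m)) as [[_ [w [H1 H2]]] _]. exists w. split. apply Hfi; auto. split; auto.
    apply Ff_dec. simpl. split. apply Kf_N with m; auto. exists x; split; auto. apply (Hx m).
  - exists w. split. apply Hfi, (Hw 0%nat). intro j; apply Hw.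
Qed.

Lemma Ainf_Inv : forall x, Ainf x -> Inv f N x.
Proof.
  intros x0 Hx0.
  assert (HN' : forall x, exists y, Ainf x -> f x y /\ Ainf y).
  { intro x. destruct (classic (Ainf x)) as [H|H]. destruct (Ainf_fwd x H) as [y Hy]; exists y; auto.
    exists x; tauto. }
  assert (HP' : forall x, exists y, Ainf x -> f y x /\ Ainf y).
  { intro x. destruct (classic (Ainf x)) as [H|H]. destruct (Ainf_bwd x H) as [y Hy]; exists y; auto.
    exists x; tauto. }
  set (nx := fun x => proj1_sig (constructive_indefinite_description _ (HN' x))).
  set (pv := fun x => proj1_sig (constructive_indefinite_description _ (HP' x))).
  assert (Hnx : forall x, Ainf x -> f x (nx x) /\ Ainf (nx x)).
  { intro x. unfold nx. destruct (constructive_indefinite_description _ (HN' x)); auto. }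
  assert (Hpv : forall x, Ainf x -> f (pv x) x /\ Ainf (pv x)).
  { intro x. unfold pv. destruct (constructive_indefinite_description _ (HP' x)); auto. }
  set (fw := fun n => Nat.iter n nx x0). set (bw := fun n => Nat.iter n pv x0).
  assert (Hfw : forall n, Ainf (fw n)).
  { induction n; simpl; auto. apply Hnx; auto. }
  assert (Hbw : forall n, Ainf (bw n)).
  { induction n; simpl; auto. apply Hpv; auto. }
  set (s := fun z : Z => if Z.ltb z 0 then bw (Z.to_nat (- z)) else fw (Z.to_nat z)).
  assert (Hs : forall z, Ainf (s z)).
  { intro z; unfold s; destruct (Z.ltb z 0); auto. }
  split. exact (proj1 (Hx0 0%nat)).
  exists s. split; [intro n; exact (proj1 (Hs n 0%nat))|]. split; [reflexivity|].
  intro z. unfold s. destruct (Z.ltb_spec z 0) as [H|H]; destruct (Z.ltb_spec (z+1) 0) as [H'|H'].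
  - replace (Z.to_nat (- z)) with (S (Z.to_nat (- (z + 1)))) by lia. simpl. apply Hpv. apply Hbw.
  - assert (z = (-1)%Z) by lia. subst z. simpl. apply (Hpv x0 Hx0).
  - lia.
  - replace (Z.to_nat (z + 1)) with (S (Z.to_nat z)) by lia. simpl. apply Hnx, Hfw.
Qed.

Lemma Inv_closed : is_closed d (Inv f N).
Proof.
  intros x Hx. apply Ainf_Inv. intro j. split.
  - apply (compact_closed d Hm _ (Kf_compact j)). intros e He. destruct (Hx e He) as [y [Hy1 Hy2]].
    exists y; split; auto. apply (Inv_Ainf y Hy1 j).
  - apply (compact_closed d Hm _ (Ff_compact j)). intros e He. destruct (Hx e He) as [y [Hy1 Hy2]].
    exists y; split; auto. apply (Inv_Ainf y Hy1 j).
Qed.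

Lemma iso_stage : forall C, is_closed d C -> subset C N -> (forall x, C x -> ~ Inv f N x) ->
  exists m, forall x, C x -> Kf m x -> Ff m x -> False.
Proof.
  intros C HC HCN HCI.
  destruct (compact_inter_closed d Hm N C HN HC nat (fun m x => ~ (Kf m x /\ Ff m x))) as [l Hl].
  - intro m. apply closed_compl_open; auto. apply compact_closed; auto. apply compact_inter; auto using Kf_compact, Ff_compact.
  - intros x [HNx HCx]. apply NNPP; intro H. apply (HCI x HCx). apply Ainf_Inv. intro j.
    apply NNPP; intro H2. apply H. exists j; auto.
  - exists (lmax l). intros x HCx HK HF. destruct (Hl x (conj (HCN x HCx) HCx)) as [i [Hi1 Hi2]].
    apply Hi2. apply lmax_In in Hi1.
    assert (Hle : forall n m x, (n <= m)%nat -> Kf m x /\ Ff m x -> Kf n x /\ Ff n x).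
    { intros n m y Hnm. induction Hnm; auto. intros [A1 A2]. apply IHHnm. split; [apply Kf_dec|apply Ff_dec]; auto. }
    apply Hle with (lmax l); auto.
Qed.

End InvF.

Lemma fmin_pos : forall L : list R, (forall r, In r L -> 0 < r) -> 0 < fold_right Rmin 1 L.
Proof. induction L; simpl; intros H. lra. apply Rmin_glb_lt; auto. Qed.
Lemma fmin_le : forall L : list R, forall r, In r L -> fold_right Rmin 1 L <= r.
Proof. induction L; simpl; intros r H. contradiction. destruct H; subst.
  apply Rmin_l. eapply Rle_trans; [apply Rmin_r|auto]. Qed.

Definition gpath {X} (g : X -> X -> Prop) (N : X -> Prop) (s : nat -> X) (n : nat) : Prop :=
  forall i, (i < n)%nat -> g (s i) (s (S i)) /\ N (s (S i)).

Lemma gpath_shift {X} g N (s : nat -> X) n k : gpath g N s n -> (k <= n)%nat ->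
  gpath g N (fun i => s (k + i)%nat) (n - k).
Proof. intros H Hk i Hi. replace (k + S i)%nat with (S (k + i)) by lia. apply H; lia. Qed.
Lemma gpath_prefix {X} g N (s : nat -> X) n m : gpath g N s n -> (m <= n)%nat -> gpath g N s m.
Proof. intros H Hm i Hi. apply H; lia. Qed.

Section Pert.
Context {X : Type} (d : X -> X -> R) (Hm : is_metric d) (N : X -> Prop) (HN : is_compact d N)
  (F : R -> X -> X -> Prop) (a b mu : R) (Hmu : in_interval a b mu)
  (HFu : forall l x (U : X -> Prop), in_interval a b l -> is_open d U -> subset (F l x) U ->
     exists e, 0 < e /\ forall l' x', in_interval a b l' -> Rabs (l - l') < e ->
       d x x' < e -> subset (F l' x') U).

Definition close (dl : R) (l : R) : Prop := in_interval a b l /\ Rabs (l - mu) < dl.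

Lemma close_mono : forall d1 d2 l, d1 <= d2 -> close d1 l -> close d2 l.
Proof. intros d1 d2 l H [H1 H2]; split; auto; lra. Qed.

Lemma N_closed : is_closed d N.
Proof. apply compact_closed; auto. Qed.

Lemma one_step : forall K U, is_compact d K -> is_open d U ->
  (forall x y, K x -> F mu x y -> N y -> U y) ->
  exists dl, 0 < dl /\ exists V, is_open d V /\ subset K V /\
    forall l, close dl l -> forall x y, V x -> F l x y -> N y -> U y.
Proof.
  intros K U HK HU HKU.
  set (U' := fun y => U y \/ ~ N y).
  assert (HU' : is_open d U').
  { intros y [Hy|Hy]. destruct (HU y Hy) as [e [He Hs]]. exists e; split; auto. intros z Hz; left; auto.
    destruct (closed_compl_open d Hm N N_closed y Hy) as [e [He Hs]]. exists e; split; auto. intros z Hz; right; auto. }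
  set (J := {p : X * R | K (fst p) /\ 0 < snd p /\ forall l' x', in_interval a b l' -> Rabs (mu - l') < snd p ->
       d (fst p) x' < snd p -> subset (F l' x') U'}).
  destruct (HK J (fun p => ball d (fst (proj1_sig p)) (snd (proj1_sig p) / 2))) as [L HL].
  - intro p; apply ball_open; auto.
  - intros x Hx. destruct (HFu mu x U' Hmu HU') as [e [He Hs]].
    { intros y Hy. destruct (classic (N y)); [left; apply (HKU x); auto|right; auto]. }
    exists (exist _ (x, e) (conj Hx (conj He Hs))). simpl. unfold ball. rewrite (m_zero d Hm); lra.
  - set (dl := fold_right Rmin 1 (map (fun p : J => snd (proj1_sig p) / 2) L)).
    assert (Hdl : 0 < dl).
    { apply fmin_pos. intros r Hr. apply in_map_iff in Hr. destruct Hr as [[[x e] [H1 [H2 H3]]] [H4 H5]].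
      simpl in H4. subst r. simpl in H2. lra. }
    exists dl. split; auto. exists (fun x => exists p, In p L /\ ball d (fst (proj1_sig p)) (snd (proj1_sig p) / 2) x).
    split. apply union_open; intro; apply ball_open; auto.
    split. intros x Hx. apply HL; auto.
    intros l [Hl1 Hl2] x y [p [Hp1 Hp2]] Hy HNy.
    assert (Hle : dl <= snd (proj1_sig p) / 2). { apply fmin_le. apply in_map_iff. exists p; auto. }
    destruct p as [[x0 e] [H1 [H2 H3]]]. simpl in *. unfold ball in Hp2.
    assert (HUy : U' y) by (apply (H3 l x Hl1); [rewrite Rabs_minus_sym; lra| lra | exact Hy]).
    destruct HUy; [auto|contradiction].
Qed.

Lemma bounded_len : forall A, is_compact d A -> (forall x y, A x -> F mu x y -> N y -> A y) ->
  forall M W, is_open d W -> subset A W ->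
  exists dl, 0 < dl /\ forall l, close dl l -> forall s n, A (s 0%nat) -> gpath (F l) N s n -> (n <= M)%nat -> W (s n).
Proof.
  intros A HA HAi. induction M; intros W HW HAW.
  - exists 1. split; [lra|]. intros l _ s n Hs0 _ Hn. replace n with 0%nat by lia. auto.
  - destruct (one_step A W HA HW) as [d1 [Hd1 [V [HV [HAV HVW]]]]].
    { intros x y Hx Hy HNy. apply HAW. apply (HAi x); auto. }
    destruct (IHM (fun x => V x /\ W x)) as [d2 [Hd2 H2]].
    { intros x [Hx1 Hx2]. destruct (HV x Hx1) as [e1 [He1 Hs1]]. destruct (HW x Hx2) as [e2 [He2 Hs2]].
      exists (Rmin e1 e2). split. apply Rmin_glb_lt; auto. intros y Hy. unfold ball in Hy.
      split; [apply Hs1|apply Hs2]; unfold ball; eapply Rlt_le_trans; eauto; [apply Rmin_l|apply Rmin_r]. }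
    { intros x Hx; split; auto. }
    exists (Rmin d1 d2). split. apply Rmin_glb_lt; auto.
    intros l Hl s n Hs0 Hp Hn.
    assert (Hl1 : close d1 l) by (apply close_mono with (Rmin d1 d2); auto; apply Rmin_l).
    assert (Hl2 : close d2 l) by (apply close_mono with (Rmin d1 d2); auto; apply Rmin_r).
    destruct (Nat.eq_dec n (S M)) as [E|E].
    + subst n. assert (HVM : V (s M)).
      { apply (H2 l Hl2 s M Hs0); auto. apply gpath_prefix with (S M); auto. }
      destruct (Hp M) as [A1 A2]; [lia|]. apply (HVW l Hl1 (s M)); auto.
    + apply (H2 l Hl2 s n Hs0 Hp). lia.
Qed.

End Pert.

Section Iso.
Context {X : Type} (d : X -> X -> R) (Hm : is_metric d) (N : X -> Prop) (HN : is_compact d N)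
  (F : R -> X -> X -> Prop) (a b mu : R) (Hmu : in_interval a b mu)
  (HFu : forall l x (U : X -> Prop), in_interval a b l -> is_open d U -> subset (F l x) U ->
     exists e, 0 < e /\ forall l' x', in_interval a b l' -> Rabs (l - l') < e ->
       d x x' < e -> subset (F l' x') U)
  (fi : X -> X -> Prop) (Hfu : usc_map d (F mu)) (Hfc : forall x, is_compact d (F mu x))
  (Hfiu : usc_map d fi) (Hfic : forall x, is_compact d (fi x)) (Hfi : forall x y, fi y x <-> F mu x y).

Let f := F mu.
Let cl := close a b mu.

Lemma fwdK : forall j W, is_open d W -> subset (Kf N f j) W ->
  exists dl, 0 < dl /\ forall l, cl dl l -> forall z, N (z 0%nat) -> gpath (F l) N z j -> W (z j).
Proof.
  induction j; intros W HW HKW.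
  - exists 1; split; [lra|]. intros; apply HKW; auto.
  - destruct (one_step d Hm N HN F a b mu Hmu HFu (Kf N f j) W) as [d1 [Hd1 [V [HV [HKV HVW]]]]]; auto.
    { apply Kf_compact; auto. }
    { intros x y Hx Hy HNy. apply HKW. simpl. split; auto. exists x; auto. }
    destruct (IHj V HV HKV) as [d2 [Hd2 H2]].
    exists (Rmin d1 d2). split. apply Rmin_glb_lt; auto.
    intros l Hl z Hz0 Hp.
    assert (Hl1 : cl d1 l) by (apply close_mono with (Rmin d1 d2); auto; apply Rmin_l).
    assert (Hl2 : cl d2 l) by (apply close_mono with (Rmin d1 d2); auto; apply Rmin_r).
    assert (HVj : V (z j)) by (apply (H2 l Hl2 z Hz0); apply gpath_prefix with (S j); auto).
    destruct (Hp j) as [A1 A2]; [lia|]. apply (HVW l Hl1 (z j)); auto.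
Qed.

Lemma fwdF : forall j B, is_compact d B -> subset B N -> (forall x, B x -> Ff N f j x -> False) ->
  exists dl, 0 < dl /\ exists V, is_open d V /\ subset B V /\
    forall l, cl dl l -> forall z, V (z 0%nat) -> gpath (F l) N z j -> False.
Proof.
  induction j; intros B HB HBN HBF.
  - exists 1; split; [lra|]. exists (fun _ => False). split. intros x [].
    split. intros x Hx. apply (HBF x Hx). simpl. auto. intros _ _ _ [].
  - set (B' := fun y => N y /\ image f B y).
    destruct (IHj B') as [d2 [Hd2 [V' [HV' [HBV' H2]]]]].
    { apply compact_inter; auto. apply image_compact; auto. }
    { intros y [Hy _]; auto. }
    { intros y [HNy [x [Hx Hxy]]] HFy. apply (HBF x Hx). simpl. split; auto. exists y; auto. }
    destruct (one_step d Hm N HN F a b mu Hmu HFu B V') as [d1 [Hd1 [V [HV [HBV HVW]]]]]; auto.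
    { intros x y Hx Hy HNy. apply HBV'. split; auto. exists x; auto. }
    exists (Rmin d1 d2). split. apply Rmin_glb_lt; auto. exists V. split; auto. split; auto.
    intros l Hl z Hz0 Hp.
    assert (Hl1 : cl d1 l) by (apply close_mono with (Rmin d1 d2); auto; apply Rmin_l).
    assert (Hl2 : cl d2 l) by (apply close_mono with (Rmin d1 d2); auto; apply Rmin_r).
    destruct (Hp 0%nat) as [A1 A2]; [lia|].
    apply (H2 l Hl2 (fun i => z (1 + i)%nat)).
    + simpl. apply (HVW l Hl1 (z 0%nat)); auto.
    + replace j with (S j - 1)%nat by lia. apply gpath_shift; auto; lia.
Qed.

Lemma isolation : forall C, is_closed d C -> subset C N -> (forall x, C x -> ~ Inv f N x) ->
  exists m dl, 0 < dl /\ forall l, cl dl l -> forall z, N (z 0%nat) -> gpath (F l) N z (m + m) -> ~ C (z m).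
Proof.
  intros C HC HCN HCI.
  destruct (iso_stage d Hm N HN f fi Hfu Hfc Hfiu Hfic Hfi C HC HCN HCI) as [m Hm'].
  destruct (fwdF m (fun x => Kf N f m x /\ C x)) as [d2 [Hd2 [V [HV [HBV H2]]]]].
  { apply compact_inter_closed; auto. apply Kf_compact; auto. }
  { intros x [Hx _]. eapply Kf_N; eauto. }
  { intros x [H1 H2] H3. apply (Hm' x); auto. }
  destruct (fwdK m (fun x => V x \/ ~ C x)) as [d1 [Hd1 H1]].
  { intros x [Hx|Hx]. destruct (HV x Hx) as [e [He Hs]]. exists e; split; auto. intros y Hy; left; auto.
    destruct (closed_compl_open d Hm C HC x Hx) as [e [He Hs]]. exists e; split; auto. intros y Hy; right; auto. }
  { intros x Hx. destruct (classic (C x)); [left; apply HBV; auto|right; auto]. }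
  exists m, (Rmin d1 d2). split. apply Rmin_glb_lt; auto.
  intros l Hl z Hz0 Hp HCz.
  assert (Hl1 : cl d1 l) by (apply close_mono with (Rmin d1 d2); auto; apply Rmin_l).
  assert (Hl2 : cl d2 l) by (apply close_mono with (Rmin d1 d2); auto; apply Rmin_r).
  destruct (H1 l Hl1 z Hz0) as [HVz|HVz]; [apply gpath_prefix with (m+m)%nat; auto; lia| |auto].
  apply (H2 l Hl2 (fun i => z (m + i)%nat)).
  - simpl. rewrite Nat.add_0_r. auto.
  - intros i Hi. replace (m + S i)%nat with (S (m + i)) by lia. apply Hp; lia.
Qed.

End Iso.

Section Conf.
Context {X : Type} (d : X -> X -> R) (Hm : is_metric d) (N : X -> Prop) (HN : is_compact d N)
  (F : R -> X -> X -> Prop) (a b mu : R) (Hmu : in_interval a b mu)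
  (HFu : forall l x (U : X -> Prop), in_interval a b l -> is_open d U -> subset (F l x) U ->
     exists e, 0 < e /\ forall l' x', in_interval a b l' -> Rabs (l - l') < e ->
       d x x' < e -> subset (F l' x') U)
  (fi : X -> X -> Prop) (Hfu : usc_map d (F mu)) (Hfc : forall x, is_compact d (F mu x))
  (Hfiu : usc_map d fi) (Hfic : forall x, is_compact d (fi x)) (Hfi : forall x y, fi y x <-> F mu x y).

Let f := F mu.
Let cl := close a b mu.

Lemma confine : forall A W C, is_compact d A -> subset A N -> (forall x y, A x -> f x y -> N y -> A y) ->
  is_open d W -> subset A W -> is_closed d C -> subset C N -> (forall x, C x -> ~ Inv f N x) ->
  (forall y, W y -> N y -> ~ A y -> C y) ->
  exists dl L, 0 < dl /\ forall l, cl dl l -> forall s n, A (s 0%nat) -> gpath (F l) N s n ->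
    (forall j, (j <= n)%nat -> W (s j)) /\ exists k, (k <= n)%nat /\ (n - k <= L)%nat /\ A (s k).
Proof.
  intros A W C HA HAN HAi HW HAW HC HCN HCI HWC.
  destruct (isolation d Hm N HN F a b mu Hmu HFu fi Hfu Hfc Hfiu Hfic Hfi C HC HCN HCI) as [m [d1 [Hd1 H1]]].
  destruct (bounded_len d Hm N HN F a b mu Hmu HFu A HA HAi (m + m + 1) W HW HAW) as [d2 [Hd2 H2]].
  exists (Rmin d1 d2), (m + m + 1)%nat. split. apply Rmin_glb_lt; auto.
  intros l Hl s n Hs0 Hp.
  assert (Hl1 : cl d1 l) by (apply close_mono with (Rmin d1 d2); auto; apply Rmin_l).
  assert (Hl2 : cl d2 l) by (apply close_mono with (Rmin d1 d2); auto; apply Rmin_r).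
  assert (HNs : forall p, (1 <= p <= n)%nat -> N (s p)).
  { intros p Hp'. destruct p; [lia|]. apply (Hp p); lia. }
  assert (key : forall j, (j <= n)%nat -> (forall p, (p < j)%nat -> W (s p)) ->
     exists k, (k <= j)%nat /\ (j - k <= m + m + 1)%nat /\ A (s k)).
  { intros j Hj HWp. apply NNPP; intro Hno.
    assert (Hj2 : (m + m + 1 < j)%nat).
    { destruct (le_lt_dec j (m + m + 1)) as [H|H]; auto. exfalso. apply Hno. exists 0%nat. split; [lia|]. split; [lia|auto]. }
    apply (H1 l Hl1 (fun i => s (j - (m + m + 1) + i)%nat)).
    - rewrite Nat.add_0_r. apply HNs; lia.
    - intros i Hi. replace (j - (m + m + 1) + S i)%nat with (S (j - (m + m + 1) + i)) by lia. apply Hp; lia.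
    - apply HWC.
      + apply HWp; lia.
      + apply HNs; lia.
      + intro HA'. apply Hno. exists (j - (m + m + 1) + m)%nat. split; [lia|]. split; [lia|auto]. }
  assert (HWall : forall j, (j <= n)%nat -> W (s j)).
  { intro j. induction j as [j IH] using (well_founded_induction lt_wf). intros Hj.
    destruct (key j Hj) as [k [Hk1 [Hk2 Hk3]]].
    { intros p Hp'. apply IH; lia. }
    replace j with (k + (j - k))%nat by lia.
    apply (H2 l Hl2 (fun i => s (k + i)%nat) (j - k)%nat).
    - rewrite Nat.add_0_r; auto.
    - apply gpath_shift; auto. apply gpath_prefix with n; auto.
    - auto. }
  split; auto. destruct (key n (le_n n)) as [k Hk]; [intros; apply HWall; lia|]. exists k; auto.
Qed.

End Conf.

Section Reach.
Context {X : Type} (d : X -> X -> R) (Hm : is_metric d) (N : X -> Prop) (g : X -> X -> Prop) (S0 : X -> Prop).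

Fixpoint Rj (j : nat) : X -> Prop :=
  match j with O => S0 | S j' => fun y => N y /\ exists x, Rj j' x /\ g x y end.
Definition Reach (y : X) : Prop := exists j, Rj j y.

Lemma Rj_path : forall j y, Rj j y -> exists s, S0 (s 0%nat) /\ gpath g N s j /\ s j = y.
Proof.
  induction j; simpl; intros y Hy.
  - exists (fun _ => y). split; auto. split; auto. intros i Hi; lia.
  - destruct Hy as [HNy [x [Hx Hxy]]]. destruct (IHj x Hx) as [s [Hs0 [Hp Hsj]]].
    exists (fun i => if Nat.eqb i (S j) then y else s i). simpl.
    split. auto. split; [|rewrite Nat.eqb_refl; auto].
    intros i Hi. destruct (Nat.eqb_spec i (S j)); [lia|]. destruct (Nat.eqb_spec (S i) (S j)) as [E|E].
    + assert (i = j) by lia. subst i. rewrite Hsj. auto.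
    + apply Hp. lia.
Qed.

Lemma path_Rj : forall s n, S0 (s 0%nat) -> gpath g N s n -> forall i, (i <= n)%nat -> Rj i (s i).
Proof.
  intros s n Hs0 Hp. induction i; intros Hi; simpl; auto.
  destruct (Hp i) as [A1 A2]; [lia|]. split; auto. exists (s i); split; auto. apply IHi; lia.
Qed.

Lemma Rj_compact : usc_map d g -> (forall x, is_compact d (g x)) -> is_compact d N -> is_compact d S0 ->
  forall j, is_compact d (Rj j).
Proof. intros Hu Hc HN HS. induction j; simpl; auto. apply compact_inter; auto. apply image_compact; auto. Qed.

Lemma Reach_compact_window : usc_map d g -> (forall x, is_compact d (g x)) -> is_compact d N -> is_compact d S0 ->
  forall L, (forall j y, Rj j y -> exists j', (j' <= L)%nat /\ Rj j' y) -> is_compact d Reach.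
Proof.
  intros Hu Hc HN HS L HL.
  assert (HU : forall L, is_compact d (fun y => exists j, (j <= L)%nat /\ Rj j y)).
  { induction L0.
    - apply compact_ext with (Rj 0). intro y; split. intro H; exists 0%nat; auto.
      intros [j [Hj Hy]]. replace j with 0%nat in Hy by lia. auto. apply Rj_compact; auto.
    - apply compact_ext with (fun y => (exists j, (j <= L0)%nat /\ Rj j y) \/ Rj (S L0) y).
      intro y; split. intros [[j [Hj Hy]]|Hy]. exists j; split; auto. exists (S L0); auto.
      intros [j [Hj Hy]]. destruct (Nat.eq_dec j (S L0)). subst; auto. left; exists j; split; auto; lia.
      apply compact_union; auto. apply Rj_compact; auto. }
  apply compact_ext with (fun y => exists j, (j <= L)%nat /\ Rj j y); auto.
  intro y; split. intros [j [_ Hy]]; exists j; auto. intros [j Hy]. apply (HL j y Hy).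
Qed.

Lemma Reach_N : subset S0 N -> forall y, Reach y -> N y.
Proof. intros HS y [j Hy]. destruct j; simpl in Hy; [apply HS; auto|tauto]. Qed.

Lemma Reach_inv : forall x y, Reach x -> g x y -> N y -> Reach y.
Proof. intros x y [j Hx] Hxy HNy. exists (S j). simpl. split; auto. exists x; auto. Qed.

Lemma Reach_base : forall x, S0 x -> Reach x.
Proof. intros x Hx. exists 0%nat. auto. Qed.

End Reach.

Lemma Reach_sub {X} (N : X -> Prop) g S0 (T : X -> Prop) : (forall x, S0 x -> T x) ->
  (forall x y, T x -> g x y -> N y -> T y) -> forall y, Reach N g S0 y -> T y.
Proof. intros H1 H2 y [j Hy]. revert y Hy. induction j; simpl; intros y Hy; auto.
  destruct Hy as [HN [x [Hx Hxy]]]. apply (H2 x); auto. Qed.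

Lemma open_inter {X} (d : X -> X -> R) (A B : X -> Prop) : is_open d A -> is_open d B -> is_open d (fun x => A x /\ B x).
Proof. intros HA HB x [Hx1 Hx2]. destruct (HA x Hx1) as [e1 [He1 Hs1]]. destruct (HB x Hx2) as [e2 [He2 Hs2]].
  exists (Rmin e1 e2). split. apply Rmin_glb_lt; auto. intros y Hy. unfold ball in Hy.
  split; [apply Hs1|apply Hs2]; unfold ball; eapply Rlt_le_trans; eauto; [apply Rmin_l|apply Rmin_r]. Qed.

Lemma relint_nbhd {X} (d : X -> X -> R) (Hm : is_metric d) (N P Q : X -> Prop) :
  subset P (rel_interior d N Q) ->
  exists W, is_open d W /\ subset P W /\ forall y, W y -> N y -> Q y.
Proof.
  intros H. exists (fun y => exists x, P x /\ exists e, 0 < e /\ subset (fun z => ball d x e z /\ N z) Q /\ d x y < e).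
  split; [|split].
  - intros y [x [Hx [e [He [Hs Hy]]]]]. exists (e - d x y). split; [lra|]. intros z Hz.
    exists x. split; auto. exists e. split; auto. split; auto. unfold ball in Hz. pose proof (m_tri d Hm x y z). lra.
  - intros x Hx. destruct (H x Hx) as [_ [e [He Hs]]]. exists x. split; auto. exists e; split; auto. split; auto.
    rewrite (m_zero d Hm); auto.
  - intros y [x [Hx [e [He [Hs Hy]]]]] HNy. apply Hs. split; auto.
Qed.

Theorem mainTheorem7 (X : Type) (d : X -> X -> R) (a b : R)
  (F : R -> X -> X -> Prop) (N : X -> Prop) (mu : R)
  (P1 P2 Q1 Q2 R1 R2 : X -> Prop) :
  is_metric d -> locally_compact d -> a <= b ->
  param_family d a b F ->
  in_interval a b mu ->
  isolating_nbhd d (F mu) N ->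
  weak_index_pair d (F mu) N P1 P2 ->
  weak_index_pair d (F mu) N Q1 Q2 ->
  weak_index_pair d (F mu) N R1 R2 ->
  subset P1 (rel_interior d N Q1) -> subset P2 (rel_interior d N Q2) ->
  subset Q1 (rel_interior d N R1) -> subset Q2 (rel_interior d N R2) ->
  exists L0 : R -> Prop,
    subset L0 (in_interval a b) /\
    (exists e, 0 < e /\ forall l, in_interval a b l -> Rabs (l - mu) < e -> L0 l) /\
    forall l, L0 l -> exists PL1 PL2 : X -> Prop,
      weak_index_pair d (F l) N PL1 PL2 /\
      subset P1 PL1 /\ subset P2 PL2 /\ subset PL1 R1 /\ subset PL2 R2.
Proof.
  intros Hm _ _ [HFu [HFc HFg]] Hmu [HN HNi] HP HQ HR HPQ1 HPQ2 HQR1 HQR2.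
  destruct HP as [HP1c [HP2c [HP21 [HP1N [HP1i [HP2i [HPb [HPc HPd]]]]]]]].
  destruct HQ as [HQ1c [HQ2c [HQ21 [HQ1N [HQ1i [HQ2i [HQb [HQc HQd]]]]]]]].
  destruct (HFg mu Hmu) as [Fd [HFd HFd1]].
  destruct HFd as [HFdu [HFdc [_ [_ HFdinv]]]].
  set (f := F mu).
  set (fi := fun y x => Fd y (-1)%Z x).
  assert (Hfi : forall x y, fi y x <-> f x y).
  { intros x y. unfold fi, f. rewrite HFdinv. apply HFd1. }
  assert (Hfiu : usc_map d fi). { intros x U HU Hs. apply (HFdu x (-1)%Z U HU Hs). }
  assert (Hfic : forall x, is_compact d (fi x)). { intro x; apply HFdc. }
  assert (Hfu : usc_map d f).
  { intros x U HU Hs. destruct (HFu mu x U Hmu HU Hs) as [e [He H]]. exists e; split; auto.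
    intros x' Hx'. apply H; auto. rewrite Rminus_diag, Rabs_R0; auto. }
  assert (Hfc : forall x, is_compact d (f x)). { intro x; apply HFc; auto. }
  assert (HNcl : is_closed d N) by (apply compact_closed; auto).
  assert (HInvcl : is_closed d (Inv f N)) by (apply (Inv_closed d Hm N HN f fi); auto).
  destruct (relint_nbhd d Hm N P1 Q1 HPQ1) as [W1 [HW1 [HPW1 HW1Q]]].
  set (C1 := fun y => N y /\ ~ interior d (setminus P1 P2) y).
  destruct (confine d Hm N HN F a b mu Hmu HFu fi Hfu Hfc Hfiu Hfic Hfi P1 W1 C1) as [dA [LA [HdA HA]]]; auto.
  { intros x y Hx Hy HNy. apply HP1i. split; auto. exists x; auto. }
  { apply closed_inter; auto. apply open_compl_closed; auto. apply interior_open; auto. }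
  { intros x [Hx _]; auto. }
  { intros x [_ Hx] HI. apply Hx, HPc, HI. }
  { intros y _ HNy HPy. split; auto. intro HI. apply HPy. apply (interior_sub d Hm) in HI. destruct HI; auto. }
  assert (HQ2I : forall x, Q2 x -> ~ Inv f N x).
  { intros x Hx HI. apply HQc in HI. apply (interior_sub d Hm) in HI. destruct HI; auto. }
  set (W2 := fun y => exists x, Q2 x /\ exists r, 0 < r /\ (forall w, d x w < 2 * r -> ~ Inv f N w) /\
              (forall z, d x z < r -> N z -> R2 z) /\ d x y < r).
  assert (HW2 : is_open d W2).
  { intros y [x [Hx [r [Hr [H1 [H2 Hy]]]]]]. exists (r - d x y). split; [lra|]. intros z Hz.
    exists x. split; auto. exists r. split; auto. split; auto. split; auto. unfold ball in Hz.
    pose proof (m_tri d Hm x y z). lra. }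
  assert (HQW2 : subset Q2 W2).
  { intros x Hx. destruct (closed_compl_open d Hm _ HInvcl x (HQ2I x Hx)) as [e1 [He1 Hs1]].
    destruct (HQR2 x Hx) as [_ [e2 [He2 Hs2]]].
    exists x. split; auto. exists (Rmin e1 e2 / 2). assert (0 < Rmin e1 e2) by (apply Rmin_glb_lt; auto).
    split; [lra|]. split; [|split].
    - intros w Hw. apply Hs1. unfold ball. pose proof (Rmin_l e1 e2). lra.
    - intros z Hz HNz. apply Hs2. split; auto. unfold ball. pose proof (Rmin_r e1 e2). lra.
    - rewrite (m_zero d Hm). lra. }
  assert (HW2R : forall y, W2 y -> N y -> R2 y).
  { intros y [x [Hx [r [Hr [H1 [H2 Hy]]]]]] HNy. apply H2; auto. }
  set (C2 := fun y => N y /\ closure d W2 y).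
  assert (HC2cl : is_closed d C2) by (apply closed_inter; auto; apply closure_closed; auto).
  assert (HC2I : forall x, C2 x -> ~ Inv f N x).
  { intros z [HNz Hcl] HI. destruct (compact_sep d Hm Q2 z HQ2c (fun H => HQ2I z H HI)) as [rho [Hrho Hsep]].
    destruct (Hcl (rho / 2)) as [w [[x [Hx [r [Hr [H1 [H2 Hw]]]]]] Hzw]]; [lra|].
    assert (Hxz : 2 * r <= d x z). { destruct (Rlt_le_dec (d x z) (2 * r)); auto. exfalso; apply (H1 z); auto. }
    pose proof (Hsep x Hx). pose proof (m_tri d Hm x w z). pose proof (m_sym d Hm w z). pose proof (m_sym d Hm z x). lra. }
  assert (HQ2N : subset Q2 N) by (intros x Hx; apply HQ1N, HQ21, Hx).
  assert (HQ2inv : forall x y, Q2 x -> f x y -> N y -> Q2 y).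
  { intros x y Hx Hy HNy. apply HQ2i. split; auto. exists x; auto. }
  assert (HC2N : subset C2 N) by (intros x [Hx _]; auto).
  assert (HWC2 : forall y, W2 y -> N y -> ~ Q2 y -> C2 y).
  { intros y Hy HNy _. split; auto. apply closure_of; auto. }
  destruct (confine d Hm N HN F a b mu Hmu HFu fi Hfu Hfc Hfiu Hfic Hfi Q2 W2 C2 HQ2c HQ2N HQ2inv HW2 HQW2 HC2cl HC2N HC2I HWC2) as [dB [LB [HdB HB]]].
  set (O := fun y => interior d (setminus P1 P2) y /\ (~ C2 y /\ ~ Q2 y)).
  assert (HO : is_open d O).
  { apply open_inter. apply interior_open; auto. apply open_inter; apply closed_compl_open; auto.
    apply compact_closed; auto. }
  set (C3 := fun y => N y /\ ~ O y).
  destruct (isolation d Hm N HN F a b mu Hmu HFu fi Hfu Hfc Hfiu Hfic Hfi C3) as [m [dC [HdC HC]]].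
  { apply closed_inter; auto. apply open_compl_closed; auto. }
  { intros x [Hx _]; auto. }
  { intros x [_ Hx] HI. apply Hx. split; [apply HPc; auto|]. split; [intro; apply (HC2I x); auto|].
    intro; apply (HQ2I x); auto. }
  set (dl := Rmin dA (Rmin dB dC)).
  assert (Hdl : 0 < dl) by (apply Rmin_glb_lt; auto; apply Rmin_glb_lt; auto).
  exists (fun l => in_interval a b l /\ Rabs (l - mu) < dl).
  split; [intros l [Hl _]; auto|]. split; [exists dl; split; auto|].
  intros l Hl.
  assert (HlA : close a b mu dA l) by (apply close_mono with dl; auto; apply Rmin_l).
  assert (HlB : close a b mu dB l) by (apply close_mono with dl; auto; unfold dl; eapply Rle_trans; [apply Rmin_r|apply Rmin_l]).
  assert (HlC : close a b mu dC l) by (apply close_mono with dl; auto; unfold dl; eapply Rle_trans; [apply Rmin_r|apply Rmin_r]).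
  destruct Hl as [Hlab _].
  set (g := F l).
  assert (Hgu : usc_map d g).
  { intros x U HU Hs. destruct (HFu l x U Hlab HU Hs) as [e [He H]]. exists e; split; auto.
    intros x' Hx'. apply H; auto. rewrite Rminus_diag, Rabs_R0; auto. }
  assert (Hgc : forall x, is_compact d (g x)). { intro x; apply HFc; auto. }
  set (PL1 := Reach N g P1).
  assert (HPL1W : forall y, PL1 y -> W1 y).
  { intros y [j Hy]. destruct (Rj_path N g P1 j y Hy) as [s [Hs0 [Hp Hsj]]]. subst y.
    apply (proj1 (HA l HlA s j Hs0 Hp)); auto. }
  assert (HPL1N : forall y, PL1 y -> N y) by (apply Reach_N; auto).
  assert (HPL1Q : forall y, PL1 y -> Q1 y) by (intros; apply HW1Q; auto).
  assert (HPL1c : is_compact d PL1).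
  { apply (Reach_compact_window d Hm N g P1 Hgu Hgc HN HP1c LA).
    intros j y Hy. destruct (Rj_path N g P1 j y Hy) as [s [Hs0 [Hp Hsj]]]. subst y.
    destruct (proj2 (HA l HlA s j Hs0 Hp)) as [k [Hk1 [Hk2 Hk3]]].
    exists (j - k)%nat. split; auto.
    assert (HH := path_Rj N g P1 (fun i => s (k + i)%nat) (j - k)).
    simpl in HH. assert (HH2 := HH ltac:(rewrite Nat.add_0_r; auto) ltac:(apply gpath_shift; auto) (j - k)%nat (le_n _)).
    replace (k + (j - k))%nat with j in HH2 by lia. exact HH2. }
  assert (HPL1cl : is_closed d PL1) by (apply compact_closed; auto).
  set (S2 := fun x => Q2 x /\ PL1 x).
  set (PL2 := Reach N g S2).
  assert (HPL21 : forall y, PL2 y -> PL1 y).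
  { apply Reach_sub. intros x [_ Hx]; auto. intros x y Hx Hxy HNy. apply Reach_inv with x; auto. }
  assert (HPL2W : forall y, PL2 y -> W2 y).
  { intros y [j Hy]. destruct (Rj_path N g S2 j y Hy) as [s [[Hs0 _] [Hp Hsj]]]. subst y.
    apply (proj1 (HB l HlB s j Hs0 Hp)); auto. }
  assert (HPL2c : is_compact d PL2).
  { apply (Reach_compact_window d Hm N g S2 Hgu Hgc HN) with LB.
    { apply compact_inter; auto. }
    intros j y Hy. destruct (Rj_path N g S2 j y Hy) as [s [Hs0 [Hp Hsj]]]. subst y.
    destruct (proj2 (HB l HlB s j (proj1 Hs0) Hp)) as [k [Hk1 [Hk2 Hk3]]].
    exists (j - k)%nat. split; auto.
    assert (HH := path_Rj N g S2 (fun i => s (k + i)%nat) (j - k)).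
    simpl in HH. assert (HH2 := HH ltac:(rewrite Nat.add_0_r; split; auto; apply HPL21; exists k; apply (path_Rj N g S2 s j); auto)
       ltac:(apply gpath_shift; auto) (j - k)%nat (le_n _)).
    replace (k + (j - k))%nat with j in HH2 by lia. exact HH2. }
  assert (HQ2out : forall x, PL1 x -> ~ interior d N x -> PL2 x).
  { intros x Hx Hi. apply Reach_base. split; auto. apply NNPP; intro HQ. apply Hi. apply HQd. split; auto. }
  exists PL1, PL2. split; [|split; [|split; [|split]]].
  - split; auto. split; auto. split; auto. split; auto.
    split; [intros y [[x [Hx Hxy]] HNy]; apply Reach_inv with x; auto|].
    split; [intros y [[x [Hx Hxy]] HNy]; apply Reach_inv with x; auto|].
    split; [|split].
    + intros x [Hx1 Hx2]. apply HPL1cl in Hx1. apply HQ2out; auto. intros [e [He Hs]].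
      destruct (Hx2 e He) as [y [[[z [Hz Hzy]] Hy] Hxy]]. apply Hy. apply Reach_inv with z; auto.
    + intros x HI. assert (HOx : O x).
      { destruct HI as [HNx [s [Hs1 [Hs2 Hs3]]]].
        apply NNPP; intro HnO.
        apply (HC l HlC (fun i => s (Z.of_nat i - Z.of_nat m)%Z)).
        - apply Hs1.
        - intros i Hi. split; [|apply Hs1].
          replace (Z.of_nat (S i) - Z.of_nat m)%Z with ((Z.of_nat i - Z.of_nat m) + 1)%Z by lia. apply Hs3.
        - replace (Z.of_nat m - Z.of_nat m)%Z with 0%Z by lia. rewrite Hs2. split; auto. }
      destruct (HO x HOx) as [e [He Hs]]. exists e. split; auto. intros y Hy.
      destruct (Hs y Hy) as [HI1 [HI2 HI3]]. split.
      * apply Reach_base. apply (interior_sub d Hm) in HI1. destruct HI1; auto.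
      * intro HPy. apply HI2. split. apply HPL1N, HPL21; auto. apply closure_of; auto.
    + intros x [Hx1 Hx2]. apply NNPP; intro Hi. apply Hx2. apply HQ2out; auto.
  - intros x Hx. apply Reach_base; auto.
  - intros x Hx. apply Reach_base. split. destruct (HPQ2 x Hx); auto. apply Reach_base; auto.
  - intros x Hx. destruct (HQR1 x (HPL1Q x Hx)); auto.
  - intros x Hx. apply HW2R; auto; apply HPL1N, HPL21; auto.
Qed.
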